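(* Assume the demand is i.i.d. with pmf $P_X$ (so $Q(x'\mid x)=P_X(x')$). Given $a\in\mathcal A$ and $\pi\in\mathcal P_{X,S}$, define $\xi(w)=\sum_{(x,s):s-x=w}\pi(x,s)$ for $w\in\mathcal W$, $b(y\mid w)=\frac{\sum_{(x,s):s-x=w}a(y\mid x,s)\pi(x,s)}{\xi(w)}$, and $\tilde a(y\mid x,s)=b(y\mid s-x)$. Then $b\in\mathcal B$, $\tilde a\in\mathcal A$, and (1) for every $y\in\mathcal Y$, $\varphi(\pi,y,a)=\varphi(\pi,y,\tilde a)$; (2) $I(a;\pi)\ge I(\tilde a;\pi)=I(b;\xi)$. Consequently, in the sequential decision problem there is no loss of optimality in restricting attention to actions of the form $\tilde a(y\mid x,s)=b(y\mid s-x)$ with $b\in\mathcal B$.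
   Context: $\mathcal X=\{0,\dots,m_x\}$, $\mathcal Y=\{0,\dots,m_y\}$, $\mathcal S=\{0,\dots,m_s\}$ with $m_x\le m_y$; $\mathcal W=\{s-x:s\in\mathcal S,x\in\mathcal X\}$; $\mathcal Y_\circ(w)=\{y\in\mathcal Y:w+y\in\mathcal S\}$; $\mathcal P_{X,S}$ the pmfs on $\mathcal X\times\mathcal S$. $\mathcal A$: conditional pmfs $a(y\mid x,s)$ with $a(\mathcal Y_\circ(s-x)\mid x,s)=1$. $\mathcal B$: conditional pmfs $b(y\mid w)$ with $b(\mathcal Y_\circ(w)\mid w)=1$; when $\xi(w)=0$, $b(\cdot\mid w)$ is taken to be an arbitrary pmf on $\mathcal Y_\circ(w)$. $I(a;\pi)$ is the mutual information between $(X,S)\sim\pi$ and $Y\sim a(\cdot\mid X,S)$; $I(b;\xi)$ is the mutual information between $W\sim\xi$ and $Y\sim b(\cdot\mid W)$. The filter is $\varphi(\pi,y,a)(x',s')=\frac{\sum_xQ(x'|x)a(y|x,s'+x-y)\pi(x,s'+x-y)}{\sum_{x,s}a(y|x,s)\pi(x,s)}$, i.e. the conditional pmf of $(X_+,S_+)$ given $Y=y$ when $(X,S)\sim\pi$, $Y\sim a(\cdot\mid X,S)$, $S_+=S+Y-X$, $X_+\sim Q(\cdot\mid X)$. The sequential problem: actions $A_t\in\mathcal A$ chosen from $(Y^{t-1},A^{t-1})$, $Y_t\sim A_t(\cdot\mid X_t,S_t)$, $S_{t+1}=S_t+Y_t-X_t$, cost $\frac1T\mathbb E[\sum_tI(A_t;\Pi_t)]$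 with $\Pi_t$ the belief on $(X_t,S_t)$. *)

(* Defs.v *)
From mathcomp Require Import all_boot all_order all_algebra.
From mathcomp Require Import reals exp.
Set Implicit Arguments. Unset Strict Implicit. Unset Printing Implicit Defensive.
Import Order.TTheory GRing.Theory Num.Theory.
Local Open Scope ring_scope.

Section Model.
Variables (R : realType) (mx my ms : nat).
(* X = 'I_mx.+1, Y = 'I_my.+1, S = 'I_ms.+1; W is a finite set of integers. *)

Definition Wseq : seq int :=
  undup [seq (s%:Z - x%:Z) | x : 'I_mx.+1 <- enum 'I_mx.+1, s : 'I_ms.+1 <- enum 'I_ms.+1].

Definition Yo (w : int) (y : 'I_my.+1) : bool := (0 <= w + y%:Z <= ms%:Z).

Definition is_pmf (T : finType) (p : T -> R) : Prop :=
  (forall t, 0 <= p t) /\ \sum_t p t = 1.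

Definition pmfXS (pi : 'I_mx.+1 -> 'I_ms.+1 -> R) : Prop :=
  (forall x s, 0 <= pi x s) /\ \sum_x \sum_s pi x s = 1.

Definition pmf_on_Yo (w : int) (p : 'I_my.+1 -> R) : Prop :=
  is_pmf p /\ \sum_(y | Yo w y) p y = 1.

(* the action set A: a x s y = a(y | x, s) *)
Definition inA (a : 'I_mx.+1 -> 'I_ms.+1 -> 'I_my.+1 -> R) : Prop :=
  forall (x : 'I_mx.+1) (s : 'I_ms.+1), pmf_on_Yo (s%:Z - x%:Z) (a x s).

(* the set B: b w y = b(y | w) *)
Definition inB (b : int -> 'I_my.+1 -> R) : Prop :=
  forall w, w \in Wseq -> pmf_on_Yo w (b w).

Definition xi_of (pi : 'I_mx.+1 -> 'I_ms.+1 -> R) (w : int) : R :=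
  \sum_(x : 'I_mx.+1) \sum_(s : 'I_ms.+1 | s%:Z - x%:Z == w) pi x s.

Definition b_numer (a : 'I_mx.+1 -> 'I_ms.+1 -> 'I_my.+1 -> R)
  (pi : 'I_mx.+1 -> 'I_ms.+1 -> R) (w : int) (y : 'I_my.+1) : R :=
  \sum_(x : 'I_mx.+1) \sum_(s : 'I_ms.+1 | s%:Z - x%:Z == w) a x s y * pi x s.

Definition atilde (b : int -> 'I_my.+1 -> R) (x : 'I_mx.+1) (s : 'I_ms.+1)
  (y : 'I_my.+1) : R := b (s%:Z - x%:Z) y.

(* summand p*c*log(c/q) of mutual information, with 0 log 0 = 0 *)
Definition miterm (p c q : R) : R :=
  if p * c == 0 then 0 else p * c * ln (c / q).

Definition MI_A (a : 'I_mx.+1 -> 'I_ms.+1 -> 'I_my.+1 -> R)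
  (pi : 'I_mx.+1 -> 'I_ms.+1 -> R) : R :=
  let q y := \sum_x \sum_s pi x s * a x s y in
  \sum_x \sum_s \sum_y miterm (pi x s) (a x s y) (q y).

Definition MI_B (b : int -> 'I_my.+1 -> R) (xi : int -> R) : R :=
  let q y := \sum_(w <- Wseq) xi w * b w y in
  \sum_(w <- Wseq) \sum_y miterm (xi w) (b w y) (q y).

Definition atS (f : 'I_ms.+1 -> R) (t : int) : R :=
  match t with
  | Posz n => if (n < ms.+1)%N then f (inord n) else 0
  | Negz _ => 0
  end.

(* the filter phi(pi, y, a)(x', s'), with transition kernel Q x' x = Q(x'|x) *)
Definition filt (Q : 'I_mx.+1 -> 'I_mx.+1 -> R)
  (pi : 'I_mx.+1 -> 'I_ms.+1 -> R) (y : 'I_my.+1)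
  (a : 'I_mx.+1 -> 'I_ms.+1 -> 'I_my.+1 -> R)
  (x' : 'I_mx.+1) (s' : 'I_ms.+1) : R :=
  (\sum_x Q x' x * atS (fun s => a x s y) (s'%:Z + x%:Z - y%:Z)
                 * atS (pi x) (s'%:Z + x%:Z - y%:Z))
  / (\sum_x \sum_s a x s y * pi x s).

End Model.

(* Main.v *)
Require Import Defs.
From mathcomp Require Import all_boot all_order all_algebra.
From mathcomp Require Import reals exp.
From mathcomp Require Import ring lra.
Set Implicit Arguments. Unset Strict Implicit.
Import Order.TTheory GRing.Theory Num.Theory.
Local Open Scope ring_scope.

Section H.
Variables (R : realType) (mx my ms : nat).
Lemma ln_le_sub1 (x : R) : 0 < x -> ln x <= x - 1.
Proof.
move=> x0; have := expR_ge1Dx (ln x).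
by rewrite lnK ?posrE // => h; lra.
Qed.

Lemma term_ineq (p c b q : R) : 0 <= p -> 0 <= c -> 0 < b -> 0 < q ->
  p * c * ln (b / q) + (p * c - p * b) <= p * c * ln (c / q).
Proof.
move=> p0 c0 b0 q0.
have [->|cn0] := eqVneq c 0.
  by rewrite !mulr0 !mul0r add0r sub0r oppr_le0 mulr_ge0 // ltW.
have cp : 0 < c by rewrite lt_def cn0.
rewrite !ln_div ?posrE ?invr_gt0 //.
have h : c * (ln b - ln c) <= b - c.
  have := ln_le_sub1 (divr_gt0 b0 cp); rewrite ln_div ?posrE // => h.
  apply: (le_trans (ler_wpM2l (ltW cp) h)).
  by rewrite mulrBr mulr1 mulrCA mulfV ?mulr1.
have h2 := ler_wpM2l p0 h.
rewrite -subr_ge0.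
have -> : p * c * (ln c - ln q) - (p * c * (ln b - ln q) + (p * c - p * b))
  = p * (b - c) - p * (c * (ln b - ln c)) by ring.
by rewrite subr_ge0.
Qed.

Lemma sum2_ge0 (I J : finType) (P : I -> J -> bool) (F : I -> J -> R) :
  (forall i j, P i j -> 0 <= F i j) -> 0 <= \sum_i \sum_(j | P i j) F i j.
Proof. by move=> h; apply: sumr_ge0 => i _; apply: sumr_ge0 => j; apply: h. Qed.

Lemma sum2_eq0 (I J : finType) (P : I -> J -> bool) (F : I -> J -> R) :
  (forall i j, P i j -> 0 <= F i j) -> \sum_i \sum_(j | P i j) F i j = 0 ->
  forall i j, P i j -> F i j = 0.
Proof.
move=> h h0 i j Pij.
have Hi : \sum_(k | P i k) F i k = 0.
  by apply: (psumr_eq0P _ h0) => // k _; apply: sumr_ge0 => k' /h.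
by apply: (psumr_eq0P _ Hi) => // k /h.
Qed.

Lemma logsum (I J : finType) (P : I -> J -> bool) (p c : I -> J -> R)
  (xi b B q : R) :
  (forall i j, 0 <= p i j) -> (forall i j, 0 <= c i j) ->
  xi = \sum_i \sum_(j | P i j) p i j ->
  B = \sum_i \sum_(j | P i j) p i j * c i j ->
  B = xi * b -> B <= q ->
  xi * b * ln (b / q) <= \sum_i \sum_(j | P i j) p i j * c i j * ln (c i j / q).
Proof.
move=> p0 c0 Hxi HB Hb Bq.
have RHS0 : (forall i j, P i j -> p i j * c i j = 0) ->
    \sum_i \sum_(j | P i j) p i j * c i j * ln (c i j / q) = 0.
  by move=> h; rewrite big1 // => i _; rewrite big1 // => j /h ->; rewrite mul0r.
have [xi0|xin0] := eqVneq xi 0.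
  rewrite xi0 !mul0r RHS0 // => i j Pij.
  by rewrite (sum2_eq0 (fun i j _ => p0 i j) (esym (etrans (esym xi0) Hxi))) ?mul0r.
have [B0|Bn0] := eqVneq B 0.
  rewrite -Hb B0 mul0r RHS0 // => i j Pij.
  apply: (sum2_eq0 _ (esym (etrans (esym B0) HB))) => // i' j' _.
  by rewrite mulr_ge0.
have xip : 0 < xi.
  by rewrite lt_def xin0 Hxi sum2_ge0.
have Bp : 0 < B.
  by rewrite lt_def Bn0 HB sum2_ge0 // => i j _; rewrite mulr_ge0.
have bE : b = B / xi by rewrite Hb mulrAC mulfV ?mul1r.
have bp : 0 < b by rewrite bE divr_gt0.
have qp : 0 < q by apply: lt_le_trans Bq.
apply: (le_trans _ (ler_sum _ (fun i _ => ler_sum _ (fun j _ =>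
          term_ineq (b := b) (p0 i j) (c0 i j) bp qp)))).
rewrite -Hb.
have -> : \sum_i \sum_(j | P i j)
   (p i j * c i j * ln (b / q) + (p i j * c i j - p i j * b)) =
   B * ln (b / q) + (B - xi * b).
  rewrite HB Hxi mulr_suml mulr_suml -sumrB -big_split /=.
  apply: eq_bigr => i _.
  by rewrite mulr_suml mulr_suml -sumrB -big_split.
by rewrite -Hb subrr addr0.
Qed.
Lemma miterm_E (p c q : R) : miterm p c q = p * c * ln (c / q).
Proof. by rewrite /miterm; case: eqP => [->|]; rewrite ?mul0r. Qed.

Lemma mem_W (x : 'I_mx.+1) (s : 'I_ms.+1) : s%:Z - x%:Z \in Wseq mx ms.
Proof.
rewrite /Wseq mem_undup.
by apply: (allpairs_f (fun (x : 'I_mx.+1) (s : 'I_ms.+1) => s%:Z - x%:Z)); rewrite mem_enum.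
Qed.

Lemma part (F : 'I_mx.+1 -> 'I_ms.+1 -> R) :
  \sum_x \sum_s F x s =
  \sum_(w <- Wseq mx ms) \sum_(x : 'I_mx.+1) \sum_(s : 'I_ms.+1 | s%:Z - x%:Z == w) F x s.
Proof.
rewrite [RHS]exchange_big /=; apply: eq_bigr => x _.
under [RHS]eq_bigr do rewrite big_mkcond /=.
rewrite [RHS]exchange_big /=; apply: eq_bigr => s _.
rewrite (bigD1_seq (s%:Z - x%:Z)) ?undup_uniq ?mem_W //= eqxx big1 ?addr0 //.
by move=> w /negPf; rewrite eq_sym => ->.
Qed.

Lemma sum_pred1_atS (f : 'I_ms.+1 -> R) (x : 'I_mx.+1) (w : int) :
  \sum_(s : 'I_ms.+1 | s%:Z - x%:Z == w) f s = atS f (w + x%:Z).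
Proof.
have E (s : 'I_ms.+1) : (s%:Z - x%:Z == w) = (s%:Z == w + x%:Z).
  by rewrite subr_eq.
under eq_bigl do rewrite E.
case Ew: (w + x%:Z) => [n|n] /=.
  case: ifP => hn.
    rewrite (big_pred1 (inord n)) // => s /=.
    apply/eqP/eqP => [[<-]|->]; first by rewrite inord_val.
    by rewrite inordK.
  rewrite big_pred0 // => s /=; apply/negP => /eqP [] sn.
  by move: (ltn_ord s); rewrite sn hn.
by rewrite big_pred0.
Qed.


Lemma sum_by_w (pi : 'I_mx.+1 -> 'I_ms.+1 -> R) (G : int -> R) :
  \sum_x \sum_s pi x s * G (s%:Z - x%:Z) = \sum_(w <- Wseq mx ms) xi_of pi w * G w.
Proof.
rewrite part; apply: eq_bigr => w _.
rewrite /xi_of mulr_suml; apply: eq_bigr => x _.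
by rewrite mulr_suml; apply: eq_bigr => s /eqP ->.
Qed.

Lemma atS_mul (f g : 'I_ms.+1 -> R) t :
  atS f t * atS g t = atS (fun s => f s * g s) t.
Proof. by case: t => [n|n] /=; [case: ifP; rewrite ?mul0r|rewrite mul0r]. Qed.

Lemma filtE (PX : 'I_mx.+1 -> R) pi y (a : 'I_mx.+1 -> 'I_ms.+1 -> 'I_my.+1 -> R) x' s' :
  filt (fun x' _ => PX x') pi y a x' s' =
  PX x' * b_numer a pi (s'%:Z - y%:Z) y / \sum_(w <- Wseq mx ms) b_numer a pi w y.
Proof.
rewrite /filt part; congr (_ / _).
rewrite /b_numer mulr_sumr; apply: eq_bigr => x _.
rewrite -mulrA atS_mul sum_pred1_atS; congr (_ * atS _ _).
by rewrite addrAC.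
Qed.


Lemma MI_A_E a (pi : 'I_mx.+1 -> 'I_ms.+1 -> R) : MI_A a pi =
  \sum_x \sum_s \sum_(y : 'I_my.+1) pi x s * a x s y *
     ln (a x s y / \sum_x' \sum_s' pi x' s' * a x' s' y).
Proof.
rewrite /MI_A /=; apply: eq_bigr => x _; apply: eq_bigr => s _.
by apply: eq_bigr => y _; rewrite miterm_E.
Qed.

Lemma MI_B_E (b : int -> 'I_my.+1 -> R) (xi : int -> R) : MI_B mx ms b xi =
  \sum_(w <- Wseq mx ms) \sum_y xi w * b w y *
     ln (b w y / \sum_(w' <- Wseq mx ms) xi w' * b w' y).
Proof.
rewrite /MI_B /=; apply: eq_bigr => w _; apply: eq_bigr => y _.
by rewrite miterm_E.
Qed.

Lemma numer_sum a (pi : 'I_mx.+1 -> 'I_ms.+1 -> R) w (P : pred 'I_my.+1) :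
  \sum_(y | P y) b_numer a pi w y =
  \sum_(x : 'I_mx.+1) \sum_(s : 'I_ms.+1 | s%:Z - x%:Z == w) (\sum_(y | P y) a x s y) * pi x s.
Proof.
rewrite /b_numer exchange_big /=; apply: eq_bigr => x _.
rewrite exchange_big /=; apply: eq_bigr => s _.
by rewrite mulr_suml.
Qed.

End H.
Unset Implicit Arguments. Set Strict Implicit.

Theorem lemma4 (R : realType) (mx my ms : nat) (PX : 'I_mx.+1 -> R)
  (pi : 'I_mx.+1 -> 'I_ms.+1 -> R) (a : 'I_mx.+1 -> 'I_ms.+1 -> 'I_my.+1 -> R)
  (b : int -> 'I_my.+1 -> R) :
  (mx <= my)%N ->
  is_pmf PX ->
  pmfXS pi ->
  inA a ->
  (forall w, w \in Wseq mx ms -> xi_of pi w != 0 ->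
     forall y, b w y = b_numer a pi w y / xi_of pi w) ->
  (forall w, w \in Wseq mx ms -> xi_of pi w = 0 -> pmf_on_Yo ms w (b w)) ->
  let Q := fun (x' _ : 'I_mx.+1) => PX x' in
  [/\ inB mx ms b,
      inA (@atilde R mx my ms b),
      (forall y x' s', filt Q pi y a x' s' = filt Q pi y (@atilde R mx my ms b) x' s'),
      MI_A (@atilde R mx my ms b) pi <= MI_A a pi
    & MI_A (@atilde R mx my ms b) pi = MI_B mx ms b (xi_of pi)].
Proof.
move=> _ _ [pi0 _] hA hb1 hb0 Q.
have a0 x s y : 0 <= a x s y by exact: (hA x s).1.1 y.
have a1 x s y : a x s y <= 1.
  by rewrite -(hA x s).1.2 (bigD1 y) //= lerDl sumr_ge0.
have numer0 w y : 0 <= b_numer a pi w y.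
  by apply: sumr_ge0 => x _; apply: sumr_ge0 => s _; rewrite mulr_ge0.
have numer_le w y : b_numer a pi w y <= xi_of pi w.
  apply: ler_sum => x _; apply: ler_sum => s _.
  by rewrite -[leRHS]mul1r ler_wpM2r.
have K w y : b_numer a pi w y = xi_of pi w * b w y.
  case: (boolP (w \in Wseq mx ms)) => Wm.
    have [xi0|xin0] := eqVneq (xi_of pi w) 0.
      rewrite xi0 mul0r; apply/eqP; rewrite eq_le numer0 andbT.
      by rewrite -xi0.
    by rewrite hb1 // mulrC divfK.
  rewrite /b_numer /xi_of !big1 ?mul0r // => x _; rewrite big_pred0 // => s;
    apply/negP => /eqP Ew; by rewrite -Ew mem_W in Wm.
have Kt w y : b_numer (atilde b) pi w y = xi_of pi w * b w y.
  rewrite /b_numer /xi_of mulr_suml; apply: eq_bigr => x _.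
  by rewrite mulr_suml; apply: eq_bigr => s /eqP Es; rewrite /atilde Es mulrC.
have hB : inB mx ms b.
  move=> w Wm.
  have [xi0|xin0] := eqVneq (xi_of pi w) 0; first exact: hb0.
  have sumP (P : pred 'I_my.+1) : (forall (x : 'I_mx.+1) (s : 'I_ms.+1), s%:Z - x%:Z = w -> \sum_(y | P y) a x s y = 1) ->
      \sum_(y | P y) b w y = 1.
    move=> hP; under eq_bigr do rewrite hb1 //.
    rewrite -mulr_suml numer_sum.
    have -> : \sum_(x : 'I_mx.+1) \sum_(s : 'I_ms.+1 | s%:Z - x%:Z == w) (\sum_(y | P y) a x s y) * pi x s = xi_of pi w.
      apply: eq_bigr => x _; apply: eq_bigr => s /eqP Es.
      by rewrite hP // mul1r.
    by rewrite mulfV.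
  split; [split|].
  - by move=> y; rewrite hb1 // divr_ge0 // sumr_ge0 // => x _; apply: sumr_ge0.
  - by apply: sumP => x s _; exact: (hA x s).1.2.
  - by apply: sumP => x s <-; exact: (hA x s).2.
have Keq w y : b_numer a pi w y = b_numer (atilde b) pi w y by rewrite K Kt.
set q := fun y => \sum_(w <- Wseq mx ms) xi_of pi w * b w y.
have qt y : \sum_x' \sum_s' pi x' s' * atilde b x' s' y = q y.
  exact: (sum_by_w pi (fun w => b w y)).
have qa y : \sum_x' \sum_s' pi x' s' * a x' s' y = q y.
  rewrite part /q; apply: eq_bigr => w _; rewrite -K /b_numer.
  by apply: eq_bigr => x _; apply: eq_bigr => s _; rewrite mulrC.
have MIt : MI_A (atilde b) pi =
    \sum_(w <- Wseq mx ms) \sum_y xi_of pi w * b w y * ln (b w y / q y).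
  rewrite MI_A_E.
  transitivity (\sum_x \sum_s pi x s *
    (fun w => \sum_y b w y * ln (b w y / q y)) (s%:Z - x%:Z)).
    apply: eq_bigr => x _; apply: eq_bigr => s _ /=; rewrite mulr_sumr.
    by apply: eq_bigr => y _; rewrite qt /atilde mulrA.
  rewrite (sum_by_w pi (fun w => \sum_y b w y * ln (b w y / q y))); apply: eq_bigr => w _.
  by rewrite mulr_sumr; apply: eq_bigr => y _; rewrite mulrA.
split.
- exact: hB.
- by move=> x s; exact: hB _ (mem_W x s).
- move=> y x' s'; rewrite /Q !filtE.
  by under eq_bigr do rewrite Keq; rewrite Keq.
- have E : MI_A a pi = \sum_(w <- Wseq mx ms) \sum_y \sum_(x : 'I_mx.+1)
      \sum_(s : 'I_ms.+1 | s%:Z - x%:Z == w) pi x s * a x s y * ln (a x s y / q y).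
    rewrite MI_A_E.
    transitivity (\sum_x \sum_s \sum_y pi x s * a x s y * ln (a x s y / q y)).
      apply: eq_bigr => x _; apply: eq_bigr => s _; apply: eq_bigr => y _.
      by rewrite qa.
    rewrite part; apply: eq_bigr => w _.
    rewrite [RHS]exchange_big /=; apply: eq_bigr => x _.
    by rewrite [RHS]exchange_big.
  rewrite MIt E; apply: ler_sum => w _; apply: ler_sum => y _.
  have Bdef : b_numer a pi w y =
      \sum_(x : 'I_mx.+1) \sum_(s : 'I_ms.+1 | s%:Z - x%:Z == w) pi x s * a x s y.
    by apply: eq_bigr => x _; apply: eq_bigr => s _; rewrite mulrC.
  apply: (logsum (P := fun (x : 'I_mx.+1) (s : 'I_ms.+1) => s%:Z - x%:Z == w)
     (p := pi) (c := fun x s => a x s y) (B := b_numer a pi w y)) => //.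
  all: try by [move=> x s; apply: a0 | rewrite K].
  rewrite Bdef -qa; apply: ler_sum => x _.
  rewrite [leRHS](bigID (fun s : 'I_ms.+1 => s%:Z - x%:Z == w)) /= lerDl.
  by apply: sumr_ge0 => s _; rewrite mulr_ge0.
- by rewrite MIt MI_B_E.
Qed.
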